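(* Let $\mathcal{H}$ be a complex Hilbert space, let $T\in\mathcal{B}(\mathcal{H})$ be a normaloid operator, and let $q\in\mathbb{C}$ with $|q|\le 1$. Then \[ |q|\, w(T)\le w_q(T)\le w(T). \]
   Context: $\mathcal{B}(\mathcal{H})$ denotes the bounded linear operators on $\mathcal{H}$ with the operator norm $\|\cdot\|$. The numerical radius is $w(T)=\sup\{|\langle Tx,x\rangle|:\|x\|=1\}$. For $|q|\le 1$, the $q$-numerical range is $W_q(T)=\{\langle Tx,y\rangle: x,y\in\mathcal{H},\ \|x\|=\|y\|=1,\ \langle x,y\rangle=q\}$ and the $q$-numerical radius is $w_q(T)=\sup\{|z|: z\in W_q(T)\}$. An operator $T$ is normaloid if $w(T)=\|T\|$. *)

(* Defs.v *)
From HB Require Import structures.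
From mathcomp Require Import all_boot all_order all_algebra.
From mathcomp Require Import all_classical all_reals complex.
Set Implicit Arguments. Unset Strict Implicit. Unset Printing Implicit Defensive.
Import Order.TTheory GRing.Theory Num.Theory.
Local Open Scope ring_scope.
Local Open Scope classical_set_scope.

Definition cmod (R : realType) (z : R[i]) : R :=
  Num.sqrt (complex.Re z ^+ 2 + complex.Im z ^+ 2).

Record hilbert (R : realType) := Hilbert {
  hV :> lmodType R[i];
  hinner : hV -> hV -> R[i];
  hinnerDl : forall (a : R[i]) (x y z : hV),
      hinner (a *: x + y) z = a * hinner x z + hinner y z;
  hinner_conj : forall x y : hV, hinner y x = conjc (hinner x y);
  hinner_ge0 : forall x : hV, complex.Im (hinner x x) = 0 /\ 0 <= complex.Re (hinner x x);
  hinner_eq0 : forall x : hV, hinner x x = 0 -> x = 0;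
  hnorm_complete : forall u : nat -> hV,
      (forall e : R, 0 < e -> exists N : nat, forall m n : nat, (N <= m)%N -> (N <= n)%N ->
         Num.sqrt (complex.Re (hinner (u m - u n) (u m - u n))) < e) ->
      exists l : hV, forall e : R, 0 < e -> exists N : nat, forall n : nat, (N <= n)%N ->
         Num.sqrt (complex.Re (hinner (u n - l) (u n - l))) < e
}.

Arguments hinner {R} h.

Definition hnorm (R : realType) (H : hilbert R) (x : H) : R :=
  Num.sqrt (complex.Re (hinner H x x)).

Definition bounded_op (R : realType) (H : hilbert R) (T : {linear H -> H}) : Prop :=
  exists M : R, forall x : H, hnorm (T x) <= M * hnorm x.

Definition opnorm (R : realType) (H : hilbert R) (T : {linear H -> H}) : R :=
  sup [set hnorm (T x) | x in [set x : H | hnorm x = 1]].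

Definition numrad (R : realType) (H : hilbert R) (T : {linear H -> H}) : R :=
  sup [set cmod (hinner H (T x) x) | x in [set x : H | hnorm x = 1]].

Definition qnumrange (R : realType) (H : hilbert R) (q : R[i]) (T : {linear H -> H})
  : set R[i] :=
  [set z | exists x y : H, [/\ hnorm x = 1, hnorm y = 1, hinner H x y = q
                              & z = hinner H (T x) y]].

Definition qnumrad (R : realType) (H : hilbert R) (q : R[i]) (T : {linear H -> H}) : R :=
  sup [set cmod z | z in qnumrange q T].

Definition normaloid (R : realType) (H : hilbert R) (T : {linear H -> H}) : Prop :=
  numrad T = opnorm T.

(* Main.v *)
Require Import Defs.
From HB Require Import structures.
From mathcomp Require Import all_boot all_order all_algebra.
From mathcomp Require Import all_classical all_reals complex.
From mathcomp Require Import ring lra.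
Import Order.TTheory GRing.Theory Num.Theory.
Local Open Scope ring_scope.
Local Open Scope complex_scope.

Section S.
Variables (R : realType) (H : hilbert R).
Local Notation ip := (hinner H).
Local Notation hnorm := (@hnorm R H).

Lemma ip0l z : ip 0 z = 0.
Proof.
have := hinnerDl 1 (0 : H) 0 z; rewrite scaler0 addr0 mul1r => h.
by apply/eqP; rewrite -(addrI _ (esym (etrans (addr0 _) h))).
Qed.

Lemma ipZl a x z : ip (a *: x) z = a * ip x z.
Proof. by have := hinnerDl a x 0 z; rewrite addr0 ip0l addr0. Qed.

Lemma ipDl x y z : ip (x + y) z = ip x z + ip y z.
Proof. by have := hinnerDl 1 x y z; rewrite scale1r mul1r. Qed.

Lemma ipNl x z : ip (- x) z = - ip x z.
Proof. by rewrite -scaleN1r ipZl mulN1r. Qed.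

Lemma ipBl x y z : ip (x - y) z = ip x z - ip y z.
Proof. by rewrite ipDl ipNl. Qed.

Lemma ipZr a x z : ip x (a *: z) = conjc a * ip x z.
Proof. by rewrite hinner_conj ipZl rmorphM /= -hinner_conj. Qed.

Lemma ipDr x y z : ip x (y + z) = ip x y + ip x z.
Proof. by rewrite hinner_conj ipDl rmorphD /= -!hinner_conj. Qed.

Lemma ipNr x z : ip x (- z) = - ip x z.
Proof. by rewrite -scaleN1r ipZr rmorphN rmorph1 mulN1r. Qed.

Lemma ipBr x y z : ip x (y - z) = ip x y - ip x z.
Proof. by rewrite ipDr ipNr. Qed.

Lemma ip0r z : ip z 0 = 0.
Proof. by rewrite hinner_conj ip0l rmorph0. Qed.

Lemma ipxx x : ip x x = (hnorm x ^+ 2)%:C.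
Proof.
case: (hinner_ge0 x) => hI hR.
rewrite /hnorm sqr_sqrtr //.
by case: (ip x x) hI hR => a b /= -> _.
Qed.

Lemma hnorm_ge0 x : 0 <= hnorm x.
Proof. exact: sqrtr_ge0. Qed.

Lemma hnorm1 x : ip x x = 1 -> hnorm x = 1.
Proof. by move=> h; rewrite /hnorm h /= sqrtr1. Qed.

Lemma hnorm1E x : hnorm x = 1 -> ip x x = 1.
Proof. by move=> h; rewrite ipxx h expr1n. Qed.

Lemma hnorm_eq0 x : hnorm x = 0 -> x = 0.
Proof.
move=> h; apply: hinner_eq0; rewrite ipxx h expr0n /=.
by [].
Qed.

Lemma cmodE (z : R[i]) : `|z| = (cmod z)%:C.
Proof. by rewrite normc_def. Qed.

Lemma cmod_ge0 (z : R[i]) : 0 <= cmod z.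
Proof. exact: sqrtr_ge0. Qed.
Lemma ip_ge0 x : 0 <= ip x x.
Proof. by rewrite ipxx ler0c sqr_ge0. Qed.

Lemma unitCS u y : hnorm y = 1 -> cmod (ip u y) <= hnorm u.
Proof.
move=> hy; set a := ip u y.
have h := ip_ge0 (u - a *: y).
rewrite ipBl ipZl !ipBr !ipZr (hnorm1E _ hy) -/a [ip y u]hinner_conj -/a in h.
have e : ip u u - conjc a * a - a * (conjc a - conjc a * 1) = ip u u - a * conjc a by ring.
rewrite e subr_ge0 -sqr_normc cmodE ipxx -rmorphXn lecR in h.
by rewrite -(ler_pXn2r (n:=2)) // ?nnegrE ?cmod_ge0 ?hnorm_ge0.
Qed.
Lemma hnorm0 : hnorm 0 = 0.
Proof. by rewrite /Defs.hnorm ip0l /= sqrtr0. Qed.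

Lemma exists_orth (Hdim : exists e1 e2 : H, [/\ hnorm e1 = 1, hnorm e2 = 1 & ip e1 e2 = 0])
  x : hnorm x = 1 -> exists z, hnorm z = 1 /\ ip x z = 0.
Proof.
move=> hx; case: Hdim => e1 [e2 [h1 h2 h12]].
case: (eqVneq (ip x e2) 0) => [h|h]; first by exists e2.
set u := e1 - ip e1 x *: x.
have hux : ip u x = 0 by rewrite ipBl ipZl (hnorm1E _ hx) mulr1 subrr.
have unz : hnorm u != 0.
  apply/eqP => /hnorm_eq0 /eqP; rewrite subr_eq0 => /eqP e1E.
  move: h12; rewrite e1E ipZl => /eqP; rewrite mulf_eq0 (negbTE h) orbF => /eqP c0.
  by move: h1; rewrite e1E c0 scale0r hnorm0 => /eqP; rewrite eq_sym oner_eq0.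
exists ((hnorm u)^-1%:C *: u); split.
  apply: hnorm1; rewrite ipZl ipZr conjc_real ipxx -!rmorphM /=.
  by rewrite mulrA -expr2 -exprMn mulVf // expr1n.
by rewrite hinner_conj ipZl hux mulr0 conjc0.
Qed.
Lemma cmodD (a b : R[i]) : cmod (a + b) <= cmod a + cmod b.
Proof. by rewrite -lecR rmorphD /= -!cmodE ler_normD. Qed.

Lemma cmodM (a b : R[i]) : cmod (a * b) = cmod a * cmod b.
Proof. by apply: complexI; rewrite rmorphM /= -!cmodE normrM. Qed.

Lemma cmodN (a : R[i]) : cmod (- a) = cmod a.
Proof. by apply: complexI; rewrite -!cmodE normrN. Qed.

Lemma cmod2 (a : R[i]) : cmod (a + a) = cmod a + cmod a.
Proof. by apply: complexI; rewrite rmorphD /= -!cmodE -!mulr2n normrMn. Qed.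

Lemma cmod_sqr (a : R[i]) : a * conjc a = (cmod a ^+ 2)%:C.
Proof. by rewrite -sqr_normc cmodE rmorphXn. Qed.

Lemma build_y x z q u c : hnorm x = 1 -> hnorm z = 1 -> ip x z = 0 ->
  conjc c = c -> c * c = 1 - q * conjc q ->
  let y := conjc q *: x + c *: z in
  [/\ hnorm y = 1, ip x y = q & ip u y = q * ip u x + c * ip u z].
Proof.
move=> hx hz hxz cc ccE y.
have ixx := hnorm1E _ hx; have izz := hnorm1E _ hz.
have izx : ip z x = 0 by rewrite hinner_conj hxz conjc0.
have ixy : ip x y = q by rewrite ipDr !ipZr conjcK cc ixx hxz; ring.
have izy : ip z y = c by rewrite ipDr !ipZr conjcK cc izx izz; ring.
split => //; last by rewrite ipDr !ipZr conjcK cc.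
apply: hnorm1; rewrite ipDl !ipZl ixy izy ccE; ring.
Qed.

Lemma key (Hdim : exists e1 e2 : H, [/\ hnorm e1 = 1, hnorm e2 = 1 & ip e1 e2 = 0])
  q x u : cmod q <= 1 -> hnorm x = 1 ->
  exists y, [/\ hnorm y = 1, ip x y = q & cmod q * cmod (ip u x) <= cmod (ip u y)].
Proof.
move=> hq hx; have [z [hz hxz]] := exists_orth Hdim _ hx.
set s := Num.sqrt (1 - cmod q ^+ 2).
have q0 := cmod_ge0 q.
have s2 : s ^+ 2 = 1 - cmod q ^+ 2 by rewrite sqr_sqrtr //; nra.
have ccE : forall c : R, c ^+ 2 = s ^+ 2 -> c%:C * c%:C = 1 - q * conjc q.
  by move=> c hc; rewrite cmod_sqr -rmorphM -expr2 hc s2 rmorphB rmorph1.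
set a := q * ip u x; set b := s%:C * ip u z.
have tri : cmod (a + a) <= cmod (a + b) + cmod (a - b).
  have -> : a + a = (a + b) + (a - b) by ring.
  by rewrite -[cmod (a - b)]cmodN; apply: le_trans (cmodD _ _) _; rewrite cmodN.
rewrite cmod2 in tri.
case: (leP (cmod a) (cmod (a + b))) => hab.
  have [hy ixy iuy] := build_y x z q u (s%:C) hx hz hxz (conjc_real s) (ccE s erefl).
  by eexists; split; [exact: hy | exact: ixy | rewrite iuy -cmodM].
have [hy ixy iuy] := build_y x z q u ((- s)%:C) hx hz hxz (conjc_real (- s)) (ccE (- s) (sqrrN s)).
eexists; split; [exact: hy | exact: ixy | rewrite iuy -cmodM].
rewrite rmorphN mulNr -/a -/b; lra.
Qed.

End S.

Theorem theorem2p7 (R : realType) (H : hilbert R)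
    (Hdim : exists e1 e2 : H, [/\ hnorm e1 = 1, hnorm e2 = 1 & hinner H e1 e2 = 0])
    (T : {linear H -> H}) (Tb : bounded_op T) (Tn : normaloid T)
    (q : R[i]) (hq : cmod q <= 1) :
  cmod q * numrad T <= qnumrad q T /\ qnumrad q T <= numrad T.
Proof.
have [M hM] := Tb.
have Tx1 : forall x : H, hnorm x = 1 -> hnorm (T x) <= M.
  by move=> x hx; have := hM x; rewrite hx mulr1.
set Sq := ([set cmod z | z in qnumrange q T])%classic.
set Sw := ([set cmod (hinner H (T x) x) | x in [set x : H | hnorm x = 1]])%classic.
set Sn := ([set hnorm (T x) | x in [set x : H | hnorm x = 1]])%classic.
have bSq : has_ubound Sq.
  exists M => r [z [x [y [hx hy _ ->]]] <-].
  exact: le_trans (@unitCS _ _ _ _ hy) (Tx1 _ hx).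
have bSw : has_ubound Sw.
  by exists M => r [x /= hx <-]; exact: le_trans (@unitCS _ _ _ _ hx) (Tx1 _ hx).
have bSn : has_ubound Sn by exists M => r [x /= hx <-]; exact: Tx1.
have [e1 [e2 [h1 _ _]]] := Hdim.
have kq : forall x : H, hnorm x = 1 ->
    exists2 r, Sq r & cmod q * cmod (hinner H (T x) x) <= r.
  move=> x hx; have [y [hy hxy hr]] := @key _ _ Hdim q x (T x) hq hx.
  by exists (cmod (hinner H (T x) y)) => //; exists (hinner H (T x) y) => //; exists x, y.
have nSq : (Sq !=set0)%classic by have [r ? _] := kq e1 h1; exists r.
have Sq0 : 0 <= sup Sq.
  case: nSq => r hr; apply: le_trans (ub_le_sup bSq hr).
  by case: hr => z _ <-; exact: cmod_ge0.
split.
  have [->|q0] := eqVneq (cmod q) 0; first by rewrite mul0r.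
  have qp : 0 < cmod q by rewrite lt0r q0 cmod_ge0.
  rewrite mulrC -ler_pdivlMr //; apply: ge_sup; first by exists (cmod (hinner H (T e1) e1)), e1.
  move=> r [x /= hx <-]; rewrite ler_pdivlMr // mulrC.
  have [r' hr' le] := kq x hx; exact: le_trans le (ub_le_sup bSq hr').
rewrite Tn /opnorm -/Sn; apply: ge_sup => // r [z [x [y [hx hy _ ->]]] <-].
apply: le_trans (@unitCS _ _ _ _ hy) _; apply: ub_le_sup => //; by exists x.
Qed.
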